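(* For $\Re(s)>1$, $$\zeta\big(\mathbb{Z}[X]/(X^2),s\big)=\zeta(s)\,\zeta(2s-1),$$ where $\zeta$ is the Riemann zeta function; in particular this function has a double pole at $s=1$.
   Context: For a commutative ring $R$ with identity in which the number $a_n(R)$ of ideals of index $n$ is finite for every $n\in\mathbb{N}$, $\zeta(R,s)=\sum_{n\ge1}a_n(R)n^{-s}$. *)

(* Defs.v *)
From Stdlib Require Import Reals ZArith List.
Open Scope R_scope.

(* Modelled as pairs (a,b) : Z*Z standing for a + b*eps, eps = class of X, eps^2 = 0. *)
Definition DN : Type := (Z * Z)%type.
Definition dn_zero : DN := (0%Z, 0%Z).
Definition dn_add (x y : DN) : DN := (fst x + fst y, snd x + snd y)%Z.
Definition dn_opp (x : DN) : DN := (- fst x, - snd x)%Z.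
Definition dn_sub (x y : DN) : DN := dn_add x (dn_opp y).
Definition dn_mul (x y : DN) : DN :=
  (fst x * fst y, fst x * snd y + snd x * fst y)%Z.

Definition is_ideal (I : DN -> Prop) : Prop :=
  I dn_zero /\
  (forall x y, I x -> I y -> I (dn_add x y)) /\
  (forall x, I x -> I (dn_opp x)) /\
  (forall r x, I x -> I (dn_mul r x)).

Definition has_index (I : DN -> Prop) (n : nat) : Prop :=
  exists reps : list DN,
    length reps = n /\
    (forall i j, (i < n)%nat -> (j < n)%nat -> i <> j ->
       ~ I (dn_sub (nth i reps dn_zero) (nth j reps dn_zero))) /\
    (forall x, exists i, (i < n)%nat /\ I (dn_sub x (nth i reps dn_zero))).

Definition ideal_count (n k : nat) : Prop :=
  exists L : list (DN -> Prop),
    length L = k /\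
    (forall i, (i < k)%nat -> is_ideal (nth i L (fun _ => False)) /\
                              has_index (nth i L (fun _ => False)) n) /\
    (forall i j, (i < k)%nat -> (j < k)%nat -> i <> j ->
       exists x, ~ (nth i L (fun _ => False) x <-> nth j L (fun _ => False) x)) /\
    (forall I, is_ideal I -> has_index I n ->
       exists i, (i < k)%nat /\ forall x, I x <-> nth i L (fun _ => False) x).

Definition Cpx : Type := (R * R)%type.
Definition Cre (z : Cpx) : R := fst z.
Definition Cmul (z w : Cpx) : Cpx :=
  (fst z * fst w - snd z * snd w, fst z * snd w + snd z * fst w).
Definition Cscale (a : R) (z : Cpx) : Cpx := (a * fst z, a * snd z).

(* n^{-s} for a positive integer n: exp(-s ln n). *)
Definition Cnpow_neg (n : nat) (s : Cpx) : Cpx :=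
  let l := ln (INR n) in
  (exp (- fst s * l) * cos (snd s * l), - (exp (- fst s * l) * sin (snd s * l))).

Definition Cseries1 (f : nat -> Cpx) (l : Cpx) : Prop :=
  infinite_sum (fun m => fst (f (S m))) (fst l) /\
  infinite_sum (fun m => snd (f (S m))) (snd l).

Definition is_zeta (s z : Cpx) : Prop := Cseries1 (fun n => Cnpow_neg n s) z.

(* Main.v *)
Require Import Defs.
From Stdlib Require Import Reals ZArith List Lia Lra Classical ClassicalEpsilon.
From Coquelicot Require Import Coquelicot.
Open Scope R_scope.

Fixpoint rsum (f : nat -> R) (N : nat) : R :=
  match N with O => 0 | S N' => rsum f N' + f (S N') end.

Lemma rsum_sum_f (f : nat -> R) N : sum_f_R0 (fun m => f (S m)) N = rsum f (S N).
Proof. induction N; simpl; [ring| rewrite IHN; simpl; ring]. Qed.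

Lemma rsum_ext f g N : (forall n, (1 <= n <= N)%nat -> f n = g n) -> rsum f N = rsum g N.
Proof. induction N; intros H; simpl; [reflexivity|]. rewrite IHN, H; [reflexivity|lia|]. intros; apply H; lia. Qed.

Lemma rsum_plus f g N : rsum (fun n => f n + g n) N = rsum f N + rsum g N.
Proof. induction N; simpl; [ring| rewrite IHN; ring]. Qed.
Lemma rsum_minus f g N : rsum (fun n => f n - g n) N = rsum f N - rsum g N.
Proof. induction N; simpl; [ring| rewrite IHN; ring]. Qed.
Lemma rsum_scal c f N : rsum (fun n => c * f n) N = c * rsum f N.
Proof. induction N; simpl; [ring| rewrite IHN; ring]. Qed.
Lemma rsum_scal_r c f N : rsum (fun n => f n * c) N = rsum f N * c.
Proof. induction N; simpl; [ring| rewrite IHN; ring]. Qed.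
Lemma rsum_le f g N : (forall n, f n <= g n) -> rsum f N <= rsum g N.
Proof. intros H; induction N; simpl; [lra| specialize (H (S N)); lra]. Qed.
Lemma rsum_abs f N : Rabs (rsum f N) <= rsum (fun n => Rabs (f n)) N.
Proof. induction N; simpl. rewrite Rabs_R0; lra.
  eapply Rle_trans; [apply Rabs_triang|lra]. Qed.
Lemma rsum_nonneg f N : (forall n, 0 <= f n) -> 0 <= rsum f N.
Proof. intros H; induction N; simpl; [lra| specialize (H (S N)); lra]. Qed.

Lemma rsum_tail (g : nat -> R) M N : (M <= N)%nat ->
  rsum (fun m => if Nat.ltb M m then g m else 0) N = rsum g N - rsum g M.
Proof.
  intros H; induction H.
  - assert (rsum (fun m => if Nat.ltb M m then g m else 0) M = 0).
    { assert (forall K, (K <= M)%nat -> rsum (fun m => if Nat.ltb M m then g m else 0) K = 0).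
      { induction K; intros HK; simpl; [reflexivity|]. rewrite IHK by lia.
        replace (Nat.ltb M (S K)) with false; [ring|]. symmetry; apply Nat.ltb_ge; lia. }
      apply H; lia. }
    rewrite H; ring.
  - simpl. rewrite IHle. replace (Nat.ltb M (S m)) with true; [ring|].
    symmetry; apply Nat.ltb_lt; lia.
Qed.

Lemma inf_from_rsum g l : Un_cv (rsum g) l -> infinite_sum (fun m => g (S m)) l.
Proof.
  intros H eps He. destruct (H eps He) as [N HN]. exists N. intros n Hn.
  rewrite rsum_sum_f. apply HN. lia.
Qed.

Lemma rsum_from_inf g l : infinite_sum (fun m => g (S m)) l -> Un_cv (rsum g) l.
Proof.
  intros H eps He. destruct (H eps He) as [N HN]. exists (S N). intros n Hn.
  destruct n as [|n]; [lia|]. rewrite <- rsum_sum_f. apply HN. lia.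
Qed.

Lemma exp_ge u : 1 + u <= exp u.
Proof. destruct (Req_dec u 0) as [->|Hu]. rewrite exp_0; lra.
  left; apply exp_ineq1; auto. Qed.

Definition E (sg : R) (n : nat) : R := exp (- sg * ln (INR n)).

Lemma E_pos sg n : 0 < E sg n.
Proof. apply exp_pos. Qed.

Lemma E_1 sg : E sg 1 = 1.
Proof. unfold E. simpl. rewrite ln_1, Rmult_0_r, exp_0. reflexivity. Qed.

Lemma E_step a N : 0 < a -> (1 <= N)%nat ->
  a * E (a + 1) (S N) <= E a N - E a (S N).
Proof.
  intros Ha HN. unfold E.
  set (x := ln (INR (S N))). set (y := ln (INR N)).
  assert (HNr : 1 <= INR N) by (apply (le_INR 1); lia).
  assert (Hn : INR (S N) = INR N + 1) by (rewrite S_INR; reflexivity).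
  assert (ex : exp x = INR N + 1) by (unfold x; rewrite exp_ln; lra).
  assert (ey : exp y = INR N) by (unfold y; rewrite exp_ln; lra).
  assert (Hxy : / (INR N + 1) <= x - y).
  { pose proof (exp_ge (y - x)) as H1.
    unfold Rminus in H1; rewrite exp_plus, exp_Ropp, ex, ey in H1.
    assert (INR N * / (INR N + 1) = 1 - / (INR N + 1)) by (field; lra). lra. }
  assert (e1 : exp (- (a + 1) * x) = exp (- a * x) * / (INR N + 1)).
  { replace (- (a + 1) * x) with (- a * x + - x) by ring. rewrite exp_plus, exp_Ropp, ex. reflexivity. }
  assert (e2 : exp (- a * y) = exp (- a * x) * exp (a * (x - y))).
  { rewrite <- exp_plus. f_equal; ring. }
  rewrite e1, e2.
  pose proof (exp_ge (a * (x - y))).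
  pose proof (exp_pos (- a * x)).
  assert (0 < / (INR N + 1)) by (apply Rinv_0_lt_compat; lra).
  assert (a * / (INR N + 1) <= a * (x - y)) by (apply Rmult_le_compat_l; lra).
  assert (exp (- a * x) * (a * / (INR N + 1)) <= exp (- a * x) * (exp (a * (x - y)) - 1)).
  { apply Rmult_le_compat_l; lra. }
  nra.
Qed.

Lemma pseries_bound sg N : 1 < sg -> rsum (E sg) N <= 1 + / (sg - 1).
Proof.
  intros Hs. set (a := sg - 1).
  assert (Ha : 0 < a) by (unfold a; lra).
  assert (H : forall N, rsum (E sg) (S N) <= 1 + (1 - E a (S N)) / a).
  { induction N0.
    - simpl. rewrite E_1. unfold E. simpl. rewrite ln_1, Rmult_0_r, exp_0.
      unfold Rdiv; rewrite Rminus_diag, Rmult_0_l. lra.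
    - change (rsum (E sg) (S (S N0))) with (rsum (E sg) (S N0) + E sg (S (S N0))).
      pose proof (E_step a (S N0) Ha ltac:(lia)).
      replace (a + 1) with sg in H by (unfold a; ring).
      assert (E sg (S (S N0)) <= (E a (S N0) - E a (S (S N0))) / a).
      { unfold Rdiv. apply (Rmult_le_reg_l a); [lra|]. field_simplify; lra. }
      assert ((1 - E a (S N0)) / a + (E a (S N0) - E a (S (S N0))) / a = (1 - E a (S (S N0))) / a)
        by (field; lra).
      lra. }
  destruct N. simpl. assert (0 < / a) by (apply Rinv_0_lt_compat; lra). lra.
  eapply Rle_trans; [apply H|]. pose proof (E_pos a (S N)).
  assert ((1 - E a (S N)) / a <= / a).
  { unfold Rdiv. rewrite <- (Rmult_1_l (/ a)) at 2. apply Rmult_le_compat_r; [left; apply Rinv_0_lt_compat; lra| lra]. }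
  lra.
Qed.

Lemma pseries_cv sg : 1 < sg -> exists l, Un_cv (rsum (E sg)) l.
Proof.
  intros Hs. destruct (growing_cv (rsum (E sg))) as [l Hl].
  - intros n. simpl. pose proof (E_pos sg (S n)). lra.
  - exists (1 + / (sg - 1)). intros x [n ->]. apply pseries_bound; auto.
  - exists l; auto.
Qed.

Lemma abs_conv (f : nat -> R) sg : 1 < sg -> (forall n, Rabs (f n) <= E sg n) ->
  (exists l, Un_cv (rsum f) l) /\ (exists B, Un_cv (rsum (fun n => Rabs (f n))) B).
Proof.
  intros Hs Hf. destruct (pseries_cv sg Hs) as [l Hl].
  assert (Hex : ex_series (fun m => E sg (S m))).
  { exists l. apply is_series_Reals. apply inf_from_rsum; auto. }
  assert (H1 : ex_series (fun m => Rabs (f (S m)))).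
  { apply (@ex_series_le R_AbsRing R_CompleteNormedModule _ (fun m => E sg (S m))); auto.
    intros n. unfold norm; simpl. unfold abs; simpl. rewrite Rabs_Rabsolu. apply Hf. }
  assert (H2 : ex_series (fun m => f (S m))) by (apply ex_series_Rabs; auto).
  split.
  - destruct H2 as [l2 H2]. exists l2. apply rsum_from_inf, is_series_Reals; auto.
  - destruct H1 as [l2 H3]. exists l2. apply is_series_Reals in H3. apply rsum_from_inf; auto.
Qed.

Lemma rsum_le_range f g N : (forall n, (1 <= n <= N)%nat -> f n <= g n) -> rsum f N <= rsum g N.
Proof. induction N; intros H; simpl; [lra|]. assert (f (S N) <= g (S N)) by (apply H; lia).
  assert (rsum f N <= rsum g N) by (apply IHN; intros; apply H; lia). lra. Qed.

Lemma Uncv_ext f g l l' : Un_cv f l -> (forall n, f n = g n) -> l = l' -> Un_cv g l'.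
Proof. intros H Hfg <- eps He. destruct (H eps He) as [N HN]. exists N. intros n Hn.
  rewrite <- Hfg. apply HN; auto. Qed.

Lemma sum_f_ge (f : nat -> R) K N : (forall n, 0 <= f n) -> (K <= N)%nat -> f K <= sum_f_R0 f N.
Proof. intros H HK. induction HK. destruct K; simpl; [lra|].
  assert (0 <= sum_f_R0 f K) by (apply cond_pos_sum; auto). lra.
  simpl. specialize (H (S m)). lra. Qed.

Lemma cv_bounded (Q : nat -> R) q : Un_cv Q q -> exists A, 0 < A /\ forall K, Rabs (Q K - q) <= A.
Proof.
  intros H. destruct (H 1 ltac:(lra)) as [N0 HN0].
  set (S0 := sum_f_R0 (fun K => Rabs (Q K - q)) N0).
  assert (0 <= S0) by (apply cond_pos_sum; intros; apply Rabs_pos).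
  exists (1 + S0). split; [lra|]. intros K.
  destruct (le_lt_dec N0 K).
  - specialize (HN0 K ltac:(lia)). unfold Rdist in HN0. lra.
  - pose proof (sum_f_ge (fun K => Rabs (Q K - q)) K N0 (fun n => Rabs_pos _) ltac:(lia)).
    simpl in H1. fold S0 in H1. lra.
Qed.

Lemma tannery (p Q : nat -> R) (P B q : R) :
  Un_cv (rsum p) P -> Un_cv (rsum (fun m => Rabs (p m))) B -> Un_cv Q q ->
  Un_cv (fun N => rsum (fun m => p m * Q (N / (m*m))%nat) N) (P * q).
Proof.
  intros HP HB HQ.
  destruct (cv_bounded Q q HQ) as [A [HA HAb]].
  assert (Hgrow : Un_growing (rsum (fun m => Rabs (p m)))).
  { intros n. simpl. pose proof (Rabs_pos (p (S n))). lra. }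
  assert (HBle := growing_ineq _ _ Hgrow HB).
  assert (HB0 : 0 <= B) by (specialize (HBle O); simpl in HBle; lra).
  set (D := fun N => rsum (fun m => p m * (Q (N / (m*m))%nat - q)) N).
  assert (HD : Un_cv D 0).
  { intros eps He.
    set (e1 := eps / (2 * (B + 1))). set (e2 := eps / (2 * (A + 1))).
    assert (He1 : 0 < e1) by (unfold e1; apply Rdiv_lt_0_compat; lra).
    assert (He2 : 0 < e2) by (unfold e2; apply Rdiv_lt_0_compat; lra).
    destruct (HB e2 He2) as [M HM]. specialize (HM M (Nat.le_refl _)).
    destruct (HQ e1 He1) as [K0 HK0].
    exists (Nat.max M (K0 * (M * M))). intros N HN.
    unfold Rdist. rewrite Rminus_0_r.
    eapply Rle_lt_trans; [apply rsum_abs|].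
    eapply Rle_lt_trans.
    { apply (rsum_le_range _ (fun m => e1 * Rabs (p m) + A * (if Nat.ltb M m then Rabs (p m) else 0))).
      intros m Hm. rewrite Rabs_mult.
      destruct (Nat.ltb M m) eqn:Em.
      - pose proof (HAb (N / (m*m))%nat). pose proof (Rabs_pos (p m)).
        assert (Rabs (p m) * Rabs (Q (N / (m * m))%nat - q) <= Rabs (p m) * A)
          by (apply Rmult_le_compat_l; auto). nra.
      - apply Nat.ltb_ge in Em.
        assert (HK : (K0 <= N / (m * m))%nat).
        { apply Nat.div_le_lower_bound; [nia|].
          assert (m * m <= M * M)%nat by (apply Nat.mul_le_mono; lia).
          assert (K0 * (m * m) <= K0 * (M * M))%nat by (apply Nat.mul_le_mono_l; lia).
          rewrite Nat.mul_comm. lia. }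
        specialize (HK0 _ HK). unfold Rdist in HK0. pose proof (Rabs_pos (p m)).
        assert (Rabs (p m) * Rabs (Q (N / (m * m))%nat - q) <= Rabs (p m) * e1)
          by (apply Rmult_le_compat_l; lra). nra. }
    rewrite rsum_plus, rsum_scal, rsum_scal, rsum_tail by lia.
    pose proof (HBle N). pose proof (HBle M). unfold Rdist in HM.
    rewrite Rabs_left1 in HM by lra.
    assert (e1 * rsum (fun m => Rabs (p m)) N <= e1 * B) by (apply Rmult_le_compat_l; lra).
    assert (A * (rsum (fun m => Rabs (p m)) N - rsum (fun m => Rabs (p m)) M) <= A * e2)
      by (apply Rmult_le_compat_l; lra).
    assert (e1 * B < eps / 2).
    { unfold e1. apply (Rmult_lt_reg_r (2 * (B+1))); [lra|]. field_simplify; [nra|lra]. }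
    assert (A * e2 < eps / 2).
    { unfold e2. apply (Rmult_lt_reg_r (2 * (A+1))); [lra|]. field_simplify; [nra|lra]. }
    lra. }
  assert (Hq : Un_cv (fun N => q * rsum p N) (q * P)).
  { apply CV_mult; auto. intros eps He. exists O. intros; unfold Rdist; rewrite Rminus_diag, Rabs_R0; lra. }
  eapply Uncv_ext. apply (CV_plus _ _ _ _ HD Hq).
  - intros N. unfold D. rewrite <- rsum_scal, <- rsum_plus. apply rsum_ext. intros; ring.
  - ring.
Qed.

Definition dv (m n : nat) : bool := Nat.eqb (n mod (m*m)) 0.

Lemma div_succ q N : (1 <= q)%nat ->
  (S N / q = N / q + (if Nat.eqb (S N mod q) 0 then 1 else 0))%nat.
Proof.
  intros Hq. pose proof (Nat.div_mod N q ltac:(lia)) as HN.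
  pose proof (Nat.mod_upper_bound N q ltac:(lia)) as Hm.
  destruct (Nat.eq_dec (N mod q + 1) q) as [E|E].
  - assert (E1 : (S N = q * (N / q + 1) + 0)%nat) by nia.
    rewrite <- (Nat.div_unique (S N) q (N/q + 1)%nat 0%nat) by lia.
    rewrite <- (Nat.mod_unique (S N) q (N/q + 1)%nat 0%nat) by lia. simpl. lia.
  - assert (E1 : (S N = q * (N / q) + (N mod q + 1))%nat) by lia.
    rewrite <- (Nat.div_unique (S N) q (N/q)%nat (N mod q + 1)%nat) by lia.
    rewrite <- (Nat.mod_unique (S N) q (N/q)%nat (N mod q + 1)%nat) by lia.
    destruct (Nat.eqb (N mod q + 1)%nat 0) eqn:Z; [apply Nat.eqb_eq in Z; lia| lia].
Qed.

Lemma rsum_div_succ h m N : (1 <= m)%nat ->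
  rsum h (S N / (m*m)) = rsum h (N / (m*m)) + (if dv m (S N) then h (S N / (m*m))%nat else 0).
Proof.
  intros Hm. unfold dv. pose proof (div_succ (m*m) N ltac:(nia)) as H.
  destruct (Nat.eqb (S N mod (m * m)) 0).
  - rewrite H. rewrite Nat.add_1_r. simpl. reflexivity.
  - rewrite H, Nat.add_0_r. ring.
Qed.

Lemma rsum_S f N : rsum f (S N) = rsum f N + f (S N).
Proof. reflexivity. Qed.

Lemma dsum (g : nat -> nat -> R) N :
  rsum (fun n => rsum (fun m => if dv m n then g m (n/(m*m))%nat else 0) n) N
  = rsum (fun m => rsum (g m) (N/(m*m))%nat) N.
Proof.
  induction N. reflexivity.
  change (rsum (fun n => rsum (fun m => if dv m n then g m (n/(m*m))%nat else 0) n) (S N))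
    with (rsum (fun n => rsum (fun m => if dv m n then g m (n/(m*m))%nat else 0) n) N
          + rsum (fun m => if dv m (S N) then g m (S N/(m*m))%nat else 0) (S N)).
  rewrite IHN.
  rewrite (rsum_ext (fun m => rsum (g m) (S N / (m * m))%nat)
     (fun m => rsum (g m) (N/(m*m))%nat + (if dv m (S N) then g m (S N/(m*m))%nat else 0))).
  2:{ intros n Hn. apply rsum_div_succ. lia. }
  rewrite rsum_plus. rewrite (rsum_S (fun m => rsum (g m) (N / (m * m))%nat) N).
  replace (N / (S N * S N))%nat with 0%nat by (symmetry; apply Nat.div_small; nia).
  change (rsum (g (S N)) 0) with 0. ring.
Qed.

Lemma pow_id (s : Cpx) m k : (1<=m)%nat -> (1<=k)%nat ->
  fst (Cnpow_neg m (2 * fst s - 1, 2 * snd s)) * fst (Cnpow_neg k s)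
  - snd (Cnpow_neg m (2 * fst s - 1, 2 * snd s)) * snd (Cnpow_neg k s)
  = INR m * fst (Cnpow_neg (m*m*k) s) /\
  fst (Cnpow_neg m (2 * fst s - 1, 2 * snd s)) * snd (Cnpow_neg k s)
  + snd (Cnpow_neg m (2 * fst s - 1, 2 * snd s)) * fst (Cnpow_neg k s)
  = INR m * snd (Cnpow_neg (m*m*k) s).
Proof.
  intros Hm Hk. unfold Cnpow_neg. simpl fst. simpl snd.
  assert (Pm : 0 < INR m) by (apply lt_0_INR; lia).
  assert (Pk : 0 < INR k) by (apply lt_0_INR; lia).
  rewrite !mult_INR, !ln_mult by (try apply Rmult_lt_0_compat; auto).
  set (Lm := ln (INR m)). set (Lk := ln (INR k)).
  set (sg := fst s). set (t := snd s).
  assert (e : exp (- (2 * sg - 1) * Lm) * exp (- sg * Lk) = INR m * exp (- sg * (Lm + Lm + Lk))).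
  { assert (HE : INR m = exp Lm) by (unfold Lm; rewrite exp_ln; auto).
    rewrite HE at 1. rewrite <- !exp_plus. f_equal. ring. }
  assert (c : cos (2 * t * Lm) * cos (t * Lk) - sin (2 * t * Lm) * sin (t * Lk) = cos (t * (Lm + Lm + Lk))).
  { rewrite <- cos_plus. f_equal. ring. }
  assert (c2 : sin (2 * t * Lm) * cos (t * Lk) + cos (2 * t * Lm) * sin (t * Lk) = sin (t * (Lm + Lm + Lk))).
  { rewrite <- sin_plus. f_equal. ring. }
  split.
  - transitivity ((exp (- (2 * sg - 1) * Lm) * exp (- sg * Lk)) *
      (cos (2 * t * Lm) * cos (t * Lk) - sin (2 * t * Lm) * sin (t * Lk))); [ring|].
    rewrite e, c. ring.
  - transitivity (- ((exp (- (2 * sg - 1) * Lm) * exp (- sg * Lk)) *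
      (sin (2 * t * Lm) * cos (t * Lk) + cos (2 * t * Lm) * sin (t * Lk)))); [ring|].
    rewrite e, c2. ring.
Qed.

Fixpoint nsum (f : nat -> nat) (N : nat) : nat :=
  match N with O => O | S N' => (nsum f N' + f (S N'))%nat end.

Definition anat (n : nat) : nat := nsum (fun m => if dv m n then m else O) n.

Lemma INR_nsum f N : INR (nsum f N) = rsum (fun m => INR (f m)) N.
Proof. induction N; simpl; [reflexivity|]. rewrite plus_INR, IHN. reflexivity. Qed.

Lemma Cbound_fst n s : Rabs (fst (Cnpow_neg n s)) <= E (fst s) n.
Proof. unfold Cnpow_neg, E; simpl. rewrite Rabs_mult, (Rabs_pos_eq (exp _)) by (left; apply exp_pos).
  pose proof (exp_pos (- fst s * ln (INR n))). pose proof (Rabs_le _ _ (COS_bound (snd s * ln (INR n)))) as _.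
  assert (Rabs (cos (snd s * ln (INR n))) <= 1) by (apply Rabs_le; apply COS_bound). nra. Qed.
Lemma Cbound_snd n s : Rabs (snd (Cnpow_neg n s)) <= E (fst s) n.
Proof. unfold Cnpow_neg, E; simpl. rewrite Rabs_Ropp, Rabs_mult, (Rabs_pos_eq (exp _)) by (left; apply exp_pos).
  pose proof (exp_pos (- fst s * ln (INR n))).
  assert (Rabs (sin (snd s * ln (INR n))) <= 1) by (apply Rabs_le; apply SIN_bound). nra. Qed.

Lemma analysis (a : nat -> nat) (s : Cpx) : 1 < Cre s -> (forall n, (1 <= n)%nat -> a n = anat n) ->
  exists z1 z2 : Cpx,
    is_zeta s z1 /\
    is_zeta (2 * fst s - 1, 2 * snd s) z2 /\
    Cseries1 (fun n => Cscale (INR (a n)) (Cnpow_neg n s)) (Cmul z1 z2).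
Proof.
  intros Hs Ha. unfold Cre in Hs.
  set (s2 := (2 * fst s - 1, 2 * snd s)).
  set (ur := fun n => fst (Cnpow_neg n s)). set (ui := fun n => snd (Cnpow_neg n s)).
  set (vr := fun n => fst (Cnpow_neg n s2)). set (vi := fun n => snd (Cnpow_neg n s2)).
  assert (Hs2 : 1 < fst s2) by (unfold s2; simpl; lra).
  destruct (abs_conv ur (fst s) Hs (fun n => Cbound_fst n s)) as [[Zr HZr] _].
  destruct (abs_conv ui (fst s) Hs (fun n => Cbound_snd n s)) as [[Zi HZi] _].
  destruct (abs_conv vr (fst s2) Hs2 (fun n => Cbound_fst n s2)) as [[VR HVR] [BR HBR]].
  destruct (abs_conv vi (fst s2) Hs2 (fun n => Cbound_snd n s2)) as [[VI HVI] [BI HBI]].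
  exists (Zr, Zi), (VR, VI).
  assert (Hpt : forall n, (1 <= n)%nat ->
    rsum (fun m => if dv m n then vr m * ur (n/(m*m))%nat - vi m * ui (n/(m*m))%nat else 0) n
      = INR (a n) * ur n /\
    rsum (fun m => if dv m n then vr m * ui (n/(m*m))%nat + vi m * ur (n/(m*m))%nat else 0) n
      = INR (a n) * ui n).
  { intros n Hn. rewrite Ha, !(Rmult_comm (INR (anat n))) by auto. unfold anat. rewrite INR_nsum.
    rewrite <- !rsum_scal. split; apply rsum_ext; intros m Hm;
    destruct (dv m n) eqn:D; try (simpl; ring);
    unfold dv in D; apply Nat.eqb_eq in D;
    assert (Hn' : n = (m * m * (n / (m*m)))%nat) by (pose proof (Nat.div_mod n (m*m) ltac:(nia)); lia);
    assert (Hk : (1 <= n / (m*m))%nat) by (destruct (n / (m*m))%nat; lia);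
    destruct (pow_id s m (n/(m*m)) ltac:(lia) Hk) as [P1 P2];
    unfold vr, ur, vi, ui, s2; rewrite <- Hn' in P1, P2;
    [rewrite P1 | rewrite P2]; ring. }
  assert (Hid1 : forall N, rsum (fun n => INR (a n) * ur n) N =
     rsum (fun m => vr m * rsum ur (N/(m*m))%nat) N - rsum (fun m => vi m * rsum ui (N/(m*m))%nat) N).
  { intros N. rewrite <- rsum_minus.
    rewrite (rsum_ext (fun n => INR (a n) * ur n)
      (fun n => rsum (fun m => if dv m n then vr m * ur (n/(m*m))%nat - vi m * ui (n/(m*m))%nat else 0) n)).
    2:{ intros n Hn. symmetry. apply Hpt. lia. }
    rewrite (dsum (fun m k => vr m * ur k - vi m * ui k)). apply rsum_ext. intros m _.
    rewrite rsum_minus, !rsum_scal. reflexivity. }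
  assert (Hid2 : forall N, rsum (fun n => INR (a n) * ui n) N =
     rsum (fun m => vr m * rsum ui (N/(m*m))%nat) N + rsum (fun m => vi m * rsum ur (N/(m*m))%nat) N).
  { intros N. rewrite <- rsum_plus.
    rewrite (rsum_ext (fun n => INR (a n) * ui n)
      (fun n => rsum (fun m => if dv m n then vr m * ui (n/(m*m))%nat + vi m * ur (n/(m*m))%nat else 0) n)).
    2:{ intros n Hn. symmetry. apply Hpt. lia. }
    rewrite (dsum (fun m k => vr m * ui k + vi m * ur k)). apply rsum_ext. intros m _.
    rewrite rsum_plus, !rsum_scal. reflexivity. }
  pose proof (tannery vr (rsum ur) VR BR Zr HVR HBR HZr) as T1.
  pose proof (tannery vi (rsum ui) VI BI Zi HVI HBI HZi) as T2.
  pose proof (tannery vr (rsum ui) VR BR Zi HVR HBR HZi) as T3.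
  pose proof (tannery vi (rsum ur) VI BI Zr HVI HBI HZr) as T4.
  split; [|split].
  - split. exact (inf_from_rsum ur Zr HZr). exact (inf_from_rsum ui Zi HZi).
  - split. exact (inf_from_rsum vr VR HVR). exact (inf_from_rsum vi VI HVI).
  - split.
    + apply (inf_from_rsum (fun n => INR (a n) * ur n)).
      refine (Uncv_ext _ _ _ _ (CV_minus _ _ _ _ T1 T2) _ _).
      intros N; rewrite Hid1; reflexivity. simpl; ring.
    + apply (inf_from_rsum (fun n => INR (a n) * ui n)).
      refine (Uncv_ext _ _ _ _ (CV_plus _ _ _ _ T3 T4) _ _).
      intros N; rewrite Hid2; reflexivity. simpl; ring.
Qed.

Open Scope Z_scope.

Lemma php (a b : nat) (f : nat -> nat) : (forall i, (i < a)%nat -> (f i < b)%nat) ->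
  (forall i j, (i < a)%nat -> (j < a)%nat -> f i = f j -> i = j) -> (a <= b)%nat.
Proof.
  intros Hb Hinj.
  replace a with (length (map f (seq 0 a))) by (rewrite length_map, length_seq; reflexivity).
  replace b with (length (seq 0 b)) by (rewrite length_seq; reflexivity).
  apply NoDup_incl_length.
  - apply NoDup_map_NoDup_ForallPairs; [|apply seq_NoDup].
    intros x y Hx Hy. apply in_seq in Hx, Hy. apply Hinj; lia.
  - intros y Hy. apply in_map_iff in Hy. destruct Hy as [x [<- Hx]]. apply in_seq in Hx.
    apply in_seq. specialize (Hb x ltac:(lia)). lia.
Qed.

Lemma choice_nat (a : nat) (P : nat -> nat -> Prop) :
  (forall i, (i < a)%nat -> exists c, P i c) -> exists f, forall i, (i < a)%nat -> P i (f i).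
Proof.
  intros H.
  assert (H' : forall i, exists c, ((i < a)%nat -> P i c)).
  { intros i. destruct (lt_dec i a) as [h|h]. destruct (H i h) as [c Hc]. exists c; auto.
    exists O; intros; lia. }
  exists (fun i => proj1_sig (constructive_indefinite_description _ (H' i))).
  intros i Hi. destruct (constructive_indefinite_description _ (H' i)) as [c Hc]. simpl. auto.
Qed.

Lemma min_nat (P : nat -> Prop) : (exists n, P n) -> exists n, P n /\ forall m, P m -> (n <= m)%nat.
Proof.
  intros [n0 Hn0]. apply NNPP. intros Hno.
  assert (forall n, forall k, (k <= n)%nat -> ~ P k).
  { induction n; intros k Hk HP.
    - apply Hno. exists k. split; auto. intros; lia.
    - apply Hno. exists k. split; auto. intros m Hm. destruct (le_lt_dec k m); auto.
      exfalso. apply (IHn m); auto. lia. }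
  apply (H n0 n0); auto.
Qed.

Lemma nth_map_seq {A} (f : nat -> A) n i z : (i < n)%nat -> nth i (map f (seq 0 n)) z = f i.
Proof. intros Hi. rewrite (nth_indep _ z (f O)) by (rewrite length_map, length_seq; auto).
  rewrite map_nth, seq_nth by auto. reflexivity. Qed.

Section Id.
Variable I : DN -> Prop.
Hypothesis HI : is_ideal I.

Lemma I_ext x y : I x -> fst x = fst y -> snd x = snd y -> I y.
Proof. destruct x, y; simpl; intros; subst; auto. Qed.
Lemma I_0 : I (0,0).
Proof. apply HI. Qed.
Lemma I_add a b c d : I (a,b) -> I (c,d) -> I (a+c, b+d).
Proof. intros. exact (proj1 (proj2 HI) (a,b) (c,d) H H0). Qed.
Lemma I_opp a b : I (a,b) -> I (-a, -b).
Proof. intros. exact (proj1 (proj2 (proj2 HI)) (a,b) H). Qed.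
Lemma I_sub a b c d : I (a,b) -> I (c,d) -> I (a-c, b-d).
Proof. intros. apply I_opp in H0. apply (I_add _ _ _ _ H) in H0. eapply I_ext; eauto; simpl; lia. Qed.
Lemma I_scale k a b : I (a,b) -> I (k*a, k*b).
Proof. intros H. apply (proj2 (proj2 (proj2 HI)) (k,0)) in H. eapply I_ext; [exact H| |]; cbn [fst snd dn_mul]; ring. Qed.
Lemma I_eps a b : I (a,b) -> I (0, a).
Proof. intros H. apply (proj2 (proj2 (proj2 HI)) (0,1)) in H. eapply I_ext; [exact H| |]; cbn [fst snd dn_mul]; ring. Qed.
Lemma I_dsub x y : I (dn_sub x y) -> I (fst x - fst y, snd x - snd y).
Proof. intros H. eapply I_ext; [exact H| |]; unfold dn_sub, dn_add, dn_opp; cbn [fst snd]; ring. Qed.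
Lemma I_dsub' x y : I (fst x - fst y, snd x - snd y) -> I (dn_sub x y).
Proof. intros H. eapply I_ext; [exact H| |]; unfold dn_sub, dn_add, dn_opp; cbn [fst snd]; ring. Qed.

Lemma index_le n m : has_index I n -> has_index I m -> (n <= m)%nat.
Proof.
  intros [r1 [L1 [D1 C1]]] [r2 [L2 [D2 C2]]].
  destruct (choice_nat n (fun i c => (c < m)%nat /\ I (dn_sub (nth i r1 dn_zero) (nth c r2 dn_zero))))
    as [f Hf].
  { intros i Hi. destruct (C2 (nth i r1 dn_zero)) as [c Hc]. exists c; auto. }
  apply (php n m f). intros i Hi; apply Hf; auto.
  intros i j Hi Hj E. destruct (Nat.eq_dec i j) as [|N]; auto. exfalso.
  apply (D1 i j Hi Hj N). destruct (Hf i Hi) as [_ H1]. destruct (Hf j Hj) as [_ H2].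
  rewrite E in H1. apply I_dsub in H1, H2. apply I_dsub'. eapply I_ext. apply (I_sub _ _ _ _ H1 H2).
  simpl; lia. simpl; lia.
Qed.
End Id.

Lemma has_index_ext (I J : DN -> Prop) n : (forall x, I x <-> J x) -> has_index I n -> has_index J n.
Proof. intros E [r [L [D C]]]. exists r. split; auto. split.
  intros i j Hi Hj N HJ. apply (D i j Hi Hj N). apply E; auto.
  intros x. destruct (C x) as [i Hi]. exists i. split; try apply E; apply Hi. Qed.

Lemma is_ideal_ext (I J : DN -> Prop) : (forall x, I x <-> J x) -> is_ideal I -> is_ideal J.
Proof. intros E [H0 [H1 [H2 H3]]]. repeat split.
  - apply E; auto.
  - intros x y Hx Hy. apply E. apply E in Hx, Hy. auto.
  - intros x Hx. apply E. apply E in Hx. auto.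
  - intros r x Hx. apply E. apply E in Hx. auto. Qed.

Definition Jset (d e t : Z) (x : DN) : Prop :=
  exists q r : Z, fst x = q * e /\ snd x = q * t + r * d.
Definition Jn (d e t : nat) := Jset (Z.of_nat d) (Z.of_nat e) (Z.of_nat t).

Lemma J_ideal d e t : (exists c, e = c * d) -> is_ideal (Jset d e t).
Proof.
  intros [c Hc]. repeat split.
  - exists 0, 0; simpl; split; ring.
  - intros [a b] [a' b'] [q [r [H1 H2]]] [q' [r' [H1' H2']]]. simpl in *.
    exists (q+q'), (r+r'). unfold dn_add; simpl. split; subst; ring.
  - intros [a b] [q [r [H1 H2]]]. simpl in *. exists (-q), (-r). unfold dn_opp; simpl; split; subst; ring.
  - intros [r0 r1] [a b] [q [r [H1 H2]]]. simpl in *. exists (r0*q), (r0*r + r1*q*c).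
    unfold dn_mul; simpl; split; subst; ring.
Qed.

Lemma small_mul (x q e : Z) : 0 < e -> -e < x < e -> x = q * e -> q = 0.
Proof. intros He Hx ->. destruct (Z.eq_dec q 0); auto.
  assert (q >= 1 \/ q <= -1) by lia. nia. Qed.

Lemma J_index (d e t : nat) : (1 <= d)%nat -> (1 <= e)%nat -> has_index (Jn d e t) (d * e).
Proof.
  intros Hd He.
  set (f := fun idx => (Z.of_nat (idx / d), Z.of_nat (idx mod d))).
  exists (map f (seq 0 (d*e))). split; [rewrite length_map, length_seq; auto|]. split.
  - intros i j Hi Hj Nij HJ. rewrite !nth_map_seq in HJ by auto.
    destruct HJ as [q [r [H1 H2]]]. unfold f, dn_sub, dn_add, dn_opp in H1, H2; simpl in H1, H2.
    assert (Hid : (i / d < e)%nat) by (apply Nat.Div0.div_lt_upper_bound; lia).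
    assert (Hjd : (j / d < e)%nat) by (apply Nat.Div0.div_lt_upper_bound; lia).
    pose proof (Nat.mod_upper_bound i d ltac:(lia)). pose proof (Nat.mod_upper_bound j d ltac:(lia)).
    assert (q = 0).
    { apply (small_mul (Z.of_nat (i/d) + - Z.of_nat (j/d)) q (Z.of_nat e)); auto; lia. }
    subst q.
    assert (r = 0).
    { apply (small_mul (Z.of_nat (i mod d) + - Z.of_nat (j mod d)) r (Z.of_nat d)); auto; lia. }
    subst r. apply Nij.
    rewrite (Nat.div_mod i d) by lia. rewrite (Nat.div_mod j d) by lia. lia.
  - intros [a b].
    assert (HeZ : Z.of_nat e <> 0) by lia. assert (HdZ : Z.of_nat d <> 0) by lia.
    set (q := a / Z.of_nat e). set (i := a mod Z.of_nat e).
    set (r := (b - q * Z.of_nat t) / Z.of_nat d). set (j := (b - q * Z.of_nat t) mod Z.of_nat d).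
    pose proof (Z.mod_pos_bound a (Z.of_nat e) ltac:(lia)) as Bi. fold i in Bi.
    pose proof (Z.mod_pos_bound (b - q * Z.of_nat t) (Z.of_nat d) ltac:(lia)) as Bj. fold j in Bj.
    pose proof (Z.div_mod a (Z.of_nat e) HeZ) as Ea. fold q i in Ea.
    pose proof (Z.div_mod (b - q * Z.of_nat t) (Z.of_nat d) HdZ) as Eb. fold r j in Eb.
    set (idx := (Z.to_nat i * d + Z.to_nat j)%nat).
    assert (Hidx : (idx < d * e)%nat) by (unfold idx; nia).
    exists idx. split; auto. rewrite nth_map_seq by auto.
    assert (D1 : (idx / d = Z.to_nat i)%nat).
    { symmetry. apply (Nat.div_unique idx d (Z.to_nat i) (Z.to_nat j)); unfold idx; lia. }
    assert (D2 : (idx mod d = Z.to_nat j)%nat).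
    { symmetry. apply (Nat.mod_unique idx d (Z.to_nat i) (Z.to_nat j)); unfold idx; lia. }
    unfold f. rewrite D1, D2, !Z2Nat.id by lia.
    exists q, r. unfold dn_sub, dn_add, dn_opp; simpl. split; lia.
Qed.

Lemma classify (I : DN -> Prop) n : is_ideal I -> has_index I n ->
  exists d e t : nat, (1<=d)%nat /\ (1<=e)%nat /\ (e mod d = 0)%nat /\ (t < d)%nat /\ (d*e = n)%nat /\
    forall x, I x <-> Jn d e t x.
Proof.
  intros HI Hn. pose proof Hn as [reps [Hlen [D C]]].
  destruct (choice_nat (S n) (fun i c => (c < n)%nat /\ I (dn_sub (Z.of_nat i, 0) (nth c reps dn_zero))))
    as [f Hf].
  { intros i _. destruct (C (Z.of_nat i, 0)) as [c Hc]. exists c; auto. }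
  assert (Hcol : exists i j, (i < S n)%nat /\ (j < S n)%nat /\ i <> j /\ f i = f j).
  { apply NNPP. intros Hno. assert (S n <= n)%nat; [|lia].
    apply (php (S n) n f). intros i Hi; apply Hf; auto.
    intros i j Hi Hj E. destruct (Nat.eq_dec i j); auto. exfalso. apply Hno. exists i, j. auto. }
  destruct Hcol as [i [j [Hi [Hj [Nij Eij]]]]].
  assert (Hij : I (Z.of_nat i - Z.of_nat j, 0)).
  { destruct (Hf i Hi) as [_ H1]. destruct (Hf j Hj) as [_ H2]. rewrite Eij in H1.
    apply (I_dsub I) in H1, H2. eapply I_ext. apply (I_sub I HI _ _ _ _ H1 H2). simpl; lia. simpl; lia. }
  assert (Hex : exists e0 : nat, (1 <= e0)%nat /\ exists b, I (Z.of_nat e0, b)).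
  { destruct (lt_dec j i).
    - exists (i - j)%nat. split; [lia|]. exists 0. eapply I_ext; [exact Hij| |]; simpl; lia.
    - exists (j - i)%nat. split; [lia|]. exists 0. apply (I_opp I HI) in Hij. eapply I_ext; [exact Hij| |]; simpl; lia. }
  destruct (min_nat _ Hex) as [e [[He [b0 Hb0]] minE]].
  assert (Hexd : exists d : nat, (1 <= d)%nat /\ I (0, Z.of_nat d)).
  { exists e. split; auto. apply (I_eps I HI _ _ Hb0). }
  destruct (min_nat _ Hexd) as [d [[Hd Hd0] minD]].
  assert (HdZ : Z.of_nat d <> 0) by lia. assert (HeZ : Z.of_nat e <> 0) by lia.
  assert (Hred : forall y, I (0, y) -> y mod Z.of_nat d = 0).
  { intros y Hy. pose proof (Z.mod_pos_bound y (Z.of_nat d) ltac:(lia)).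
    pose proof (Z.div_mod y (Z.of_nat d) HdZ).
    assert (I (0, y mod Z.of_nat d)).
    { pose proof (I_scale I HI (y / Z.of_nat d) _ _ Hd0).
      eapply I_ext. apply (I_sub I HI _ _ _ _ Hy H1). simpl; lia. simpl; lia. }
    destruct (Z.eq_dec (y mod Z.of_nat d) 0); auto. exfalso.
    specialize (minD (Z.to_nat (y mod Z.of_nat d))). rewrite Z2Nat.id in minD by lia.
    assert (d <= Z.to_nat (y mod Z.of_nat d))%nat by (apply minD; split; auto; lia). lia. }
  set (t := Z.to_nat (b0 mod Z.of_nat d)).
  assert (Ht : Z.of_nat t = b0 mod Z.of_nat d) by (unfold t; rewrite Z2Nat.id; [reflexivity|];
    pose proof (Z.mod_pos_bound b0 (Z.of_nat d) ltac:(lia)); lia).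
  assert (Het : I (Z.of_nat e, Z.of_nat t)).
  { pose proof (I_scale I HI (b0 / Z.of_nat d) _ _ Hd0).
    pose proof (Z.div_mod b0 (Z.of_nat d) HdZ).
    eapply I_ext. apply (I_sub I HI _ _ _ _ Hb0 H). simpl; lia. simpl; lia. }
  assert (Hde : (e mod d = 0)%nat).
  { pose proof (Hred _ (I_eps I HI _ _ Hb0)). rewrite <- Nat2Z.inj_mod in H. lia. }
  assert (Hiff : forall x, I x <-> Jn d e t x).
  { intros [a b]. split.
    - intros Hab. set (q := a / Z.of_nat e).
      pose proof (Z.mod_pos_bound a (Z.of_nat e) ltac:(lia)).
      pose proof (Z.div_mod a (Z.of_nat e) HeZ). fold q in H0.
      assert (I (a mod Z.of_nat e, b - q * Z.of_nat t)).
      { pose proof (I_scale I HI q _ _ Het). eapply I_ext. apply (I_sub I HI _ _ _ _ Hab H1).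
        simpl; lia. simpl; lia. }
      assert (Ha0 : a mod Z.of_nat e = 0).
      { destruct (Z.eq_dec (a mod Z.of_nat e) 0); auto. exfalso.
        specialize (minE (Z.to_nat (a mod Z.of_nat e))). rewrite Z2Nat.id in minE by lia.
        assert (e <= Z.to_nat (a mod Z.of_nat e))%nat by (apply minE; split; [lia|]; eauto). lia. }
      rewrite Ha0 in H1. pose proof (Hred _ H1) as Hr.
      pose proof (Z.div_mod (b - q * Z.of_nat t) (Z.of_nat d) HdZ).
      exists q, ((b - q * Z.of_nat t) / Z.of_nat d). simpl. split; lia.
    - intros [q [r [H1 H2]]]. simpl in H1, H2.
      pose proof (I_scale I HI q _ _ Het). pose proof (I_scale I HI r _ _ Hd0).
      eapply I_ext. apply (I_add I HI _ _ _ _ H H0). simpl; lia. simpl; lia. }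
  exists d, e, t. refine (conj Hd (conj He (conj Hde (conj _ (conj _ Hiff))))).
  - unfold t. pose proof (Z.mod_pos_bound b0 (Z.of_nat d) ltac:(lia)). lia.
  - assert (HJ : is_ideal (Jn d e t)) by (apply (is_ideal_ext I); auto).
    assert (HJn : has_index (Jn d e t) n) by (apply (has_index_ext I); auto).
    pose proof (J_index d e t Hd He).
    pose proof (index_le _ HJ _ _ HJn H). pose proof (index_le _ HJ _ _ H HJn). lia.
Qed.


Definition codes (n : nat) : list (nat * nat) :=
  flat_map (fun d => if dv d n then map (pair d) (seq 0 d) else nil) (seq 1 n).

Lemma in_codes n d t : In (d,t) (codes n) <-> ((1 <= d <= n)%nat /\ dv d n = true /\ (t < d)%nat).
Proof.
  unfold codes. rewrite in_flat_map. split.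
  - intros [d' [Hd' Hin]]. apply in_seq in Hd'. destruct (dv d' n) eqn:E; [|destruct Hin].
    apply in_map_iff in Hin. destruct Hin as [t' [Ht' Hin]]. inversion Ht'; subst.
    apply in_seq in Hin. repeat split; auto; lia.
  - intros [Hd [E Ht]]. exists d. split. apply in_seq; lia. rewrite E. apply in_map_iff.
    exists t. split; auto. apply in_seq; lia.
Qed.

Lemma nodup_flat {B} (F : nat -> list (nat * B)) l : NoDup l ->
  (forall x, NoDup (F x)) -> (forall x y, In y (F x) -> fst y = x) -> NoDup (flat_map F l).
Proof.
  intros Hl HF Hf. induction Hl; simpl. constructor.
  apply NoDup_app; auto. intros y Hy Hy'. apply in_flat_map in Hy'. destruct Hy' as [x' [Hx' Hy']].
  apply Hf in Hy, Hy'. subst. congruence.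
Qed.

Lemma codes_nodup n : NoDup (codes n).
Proof.
  apply nodup_flat. apply seq_NoDup.
  - intros x. destruct (dv x n); [|constructor]. apply NoDup_map_NoDup_ForallPairs; [|apply seq_NoDup].
    intros a b _ _ E. inversion E; auto.
  - intros x y Hy. destruct (dv x n); [|destruct Hy]. apply in_map_iff in Hy. destruct Hy as [t [<- _]]. reflexivity.
Qed.

Lemma nsum_list g n : nsum g n = list_sum (map g (seq 1 n)).
Proof. induction n. reflexivity. rewrite seq_S, map_app, list_sum_app. simpl. rewrite IHn. lia. Qed.

Lemma codes_len n : length (codes n) = anat n.
Proof.
  unfold codes, anat. rewrite length_flat_map, nsum_list. f_equal. apply map_ext.
  intros d. destruct (dv d n); [rewrite length_map, length_seq|]; reflexivity.
Qed.

Lemma J_code_inj d t d' t' e e' : (1 <= d)%nat -> (1 <= d')%nat -> (1 <= e)%nat -> (1 <= e')%nat ->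
  (t < d)%nat -> (t' < d')%nat -> (forall x, Jn d e t x <-> Jn d' e' t' x) -> d = d' /\ t = t'.
Proof.
  intros Hd Hd' He He' Ht Ht' E.
  assert (A : forall (d e t d' e' t' : nat), (1 <= d)%nat -> (1 <= e')%nat ->
     (forall x, Jn d e t x -> Jn d' e' t' x) -> exists r, Z.of_nat d = r * Z.of_nat d').
  { intros d0 e0 t0 d1 e1 t1 H0 H1 H.
    destruct (H (0, Z.of_nat d0)) as [q [r [H2 H3]]]. exists 0, 1. cbn [fst snd]; split; ring.
    cbn [fst snd] in H2, H3. assert (q = 0) by nia. subst. exists r. lia. }
  destruct (A d e t d' e' t' Hd He' (fun x => proj1 (E x))) as [r1 R1].
  destruct (A d' e' t' d e t Hd' He (fun x => proj2 (E x))) as [r2 R2].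
  assert (P1 : r1 > 0) by nia. assert (P2 : r2 > 0) by nia.
  assert (Z.of_nat d >= Z.of_nat d') by nia. assert (Z.of_nat d' >= Z.of_nat d) by nia.
  assert (Dd : d = d') by lia. subst d'.
  destruct (proj1 (E (Z.of_nat e, Z.of_nat t))) as [q [r [H2 H3]]].
  { exists 1, 0. cbn [fst snd]; split; ring. }
  destruct (proj2 (E (Z.of_nat e', Z.of_nat t'))) as [q' [r' [H2' H3']]].
  { exists 1, 0. cbn [fst snd]; split; ring. }
  cbn [fst snd] in *.
  assert (q > 0) by nia. assert (q' > 0) by nia.
  assert (Z.of_nat e >= Z.of_nat e') by nia. assert (Z.of_nat e' >= Z.of_nat e) by nia.
  assert (q = 1) by nia. subst q.
  assert (r = 0) by (apply (small_mul (Z.of_nat t - Z.of_nat t') r (Z.of_nat d)); lia). subst r. split; auto. lia.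
Qed.

Definition Jc (n : nat) (c : nat * nat) := Jn (fst c) (n / fst c) (snd c).

Lemma code_facts n d t : In (d,t) (codes n) ->
  (1 <= d)%nat /\ (1 <= n / d)%nat /\ (t < d)%nat /\ (d * (n / d) = n)%nat /\ exists c, Z.of_nat (n/d) = c * Z.of_nat d.
Proof.
  intros H. apply in_codes in H. destruct H as [Hd [E Ht]]. unfold dv in E. apply Nat.eqb_eq in E.
  pose proof (Nat.div_mod n (d*d) ltac:(nia)) as Hn. rewrite E, Nat.add_0_r in Hn.
  set (k := (n / (d*d))%nat) in *.
  assert (Hnd : (n / d = d * k)%nat).
  { rewrite Hn. replace (d * d * k)%nat with ((d * k) * d)%nat by ring. apply Nat.div_mul. lia. }
  rewrite Hnd. assert (1 <= k)%nat by (destruct k; lia).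
  repeat split; try lia. exists (Z.of_nat k). lia.
Qed.

Lemma count_exists n : (1 <= n)%nat -> ideal_count n (anat n).
Proof.
  intros Hn. exists (map (Jc n) (codes n)). rewrite length_map, codes_len.
  assert (Hnth : forall i, (i < anat n)%nat -> nth i (map (Jc n) (codes n)) (fun _ => False)
                              = Jc n (nth i (codes n) (0,0)%nat)).
  { intros i Hi. rewrite (nth_indep _ _ (Jc n (0,0)%nat)) by (rewrite length_map, codes_len; auto).
    apply map_nth. }
  assert (Hin : forall i, (i < anat n)%nat -> In (nth i (codes n) (0,0)%nat) (codes n)).
  { intros i Hi. apply nth_In. rewrite codes_len; auto. }
  split; [reflexivity|]. split; [|split].
  - intros i Hi. rewrite Hnth by auto. specialize (Hin i Hi).
    destruct (nth i (codes n) (0,0)%nat) as [d t].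
    destruct (code_facts n d t Hin) as [Hd [He [Ht [Hde Hc]]]]. unfold Jc; simpl. split.
    + apply J_ideal. auto.
    + pose proof (J_index d (n/d) t Hd He). rewrite Hde in H. auto.
  - intros i j Hi Hj Nij. rewrite !Hnth by auto.
    pose proof (Hin i Hi) as Ii. pose proof (Hin j Hj) as Ij.
    assert (Ncode : nth i (codes n) (0,0)%nat <> nth j (codes n) (0,0)%nat).
    { intros E. apply Nij. apply (proj1 (NoDup_nth (codes n) (0,0)%nat) (codes_nodup n));
      auto; rewrite codes_len; auto. }
    destruct (nth i (codes n) (0,0)%nat) as [d t]. destruct (nth j (codes n) (0,0)%nat) as [d' t'].
    destruct (code_facts n d t Ii) as [Hd [He [Ht [Hde Hc]]]].
    destruct (code_facts n d' t' Ij) as [Hd' [He' [Ht' [Hde' Hc']]]].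
    apply NNPP. intros Hno. apply Ncode.
    assert (E : forall x, Jc n (d,t) x <-> Jc n (d',t') x).
    { intros x. apply NNPP. intros H. apply Hno. exists x. auto. }
    unfold Jc in E; simpl in E. destruct (J_code_inj _ _ _ _ _ _ Hd Hd' He He' Ht Ht' E). subst; auto.
  - intros I HI Hidx. destruct (classify I n HI Hidx) as [d [e [t [Hd [He [Hem [Ht [Hde Hiff]]]]]]]].
    assert (Hc : In (d,t) (codes n)).
    { apply in_codes. repeat split; try lia; try nia. unfold dv. apply Nat.eqb_eq.
      pose proof (Nat.div_mod e d ltac:(lia)). rewrite Hem, Nat.add_0_r in H.
      rewrite <- Hde, H. replace (d * (d * (e / d)))%nat with ((e/d) * (d * d))%nat by ring.
      apply Nat.Div0.mod_mul. }
    destruct (In_nth _ _ (0,0)%nat Hc) as [i [Hi Ei]]. rewrite codes_len in Hi.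
    exists i. split; auto. rewrite Hnth, Ei by auto. unfold Jc; simpl.
    replace (n / d)%nat with e; auto. rewrite <- Hde. rewrite Nat.mul_comm, Nat.div_mul; lia.
Qed.

Lemma count_le n k k' : ideal_count n k -> ideal_count n k' -> (k <= k')%nat.
Proof.
  intros [L1 [Hl1 [P1 [D1 C1]]]] [L2 [Hl2 [P2 [D2 C2]]]].
  destruct (choice_nat k (fun i c => (c < k')%nat /\
      forall x, nth i L1 (fun _ => False) x <-> nth c L2 (fun _ => False) x)) as [f Hf].
  { intros i Hi. destruct (P1 i Hi) as [Ha Hb]. apply (C2 _ Ha Hb). }
  apply (php k k' f). intros i Hi; apply Hf; auto.
  intros i j Hi Hj E. destruct (Nat.eq_dec i j); auto. exfalso.
  destruct (D1 i j Hi Hj n0) as [x Hx]. apply Hx.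
  destruct (Hf i Hi) as [_ H1]. destruct (Hf j Hj) as [_ H2]. rewrite E in H1.
  specialize (H1 x); specialize (H2 x). tauto.
Qed.

Open Scope R_scope.

Theorem mainTheorem10 :
  (forall n : nat, (1 <= n)%nat -> exists k : nat, ideal_count n k) /\
  (forall a : nat -> nat,
     (forall n : nat, (1 <= n)%nat -> ideal_count n (a n)) ->
     forall s : Cpx, 1 < Cre s ->
       exists z1 z2 : Cpx,
         is_zeta s z1 /\
         is_zeta (2 * fst s - 1, 2 * snd s) z2 /\
         Cseries1 (fun n => Cscale (INR (a n)) (Cnpow_neg n s)) (Cmul z1 z2)).
Proof.
  split.
  - intros n Hn. exists (anat n). apply count_exists; auto.
  - intros a Ha s Hs. apply analysis; auto.
    intros n Hn. pose proof (count_exists n Hn). pose proof (Ha n Hn).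
    pose proof (count_le _ _ _ H H0). pose proof (count_le _ _ _ H0 H). lia.
Qed.
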